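(* Let $K\subseteq\mathbb{R}^n$ be a proper cone and $A\in\mathbb{R}^{n\times n}$ nonsingular. Let $A=U-V$ be a convergent $K$-regular splitting and let $U=F-G$ be a convergent $K$-weak regular splitting of type II such that $VF^{-1}G=GF^{-1}V$. Then the stationary two-stage iterative method is convergent for any initial vector $x_0$; that is, for every positive integer $s$, the iteration matrix $$T_{s}=(F^{-1}G)^{s}+\sum_{j=0}^{s-1}(F^{-1}G)^{j}F^{-1}V$$ satisfies $\rho(T_s)<1$, so that the iterates $x_{k+1}=T_s x_k + \sum_{j=0}^{s-1}(F^{-1}G)^jF^{-1}b$ converge to $A^{-1}b$ for every $x_0$ and every $b$.
   Context: A proper cone $K\subseteq\mathbb{R}^n$ is a closed, convex, pointed ($K\cap(-K)=\{0\}$), solid (nonempty interior) cone. For $M\in\mathbb{R}^{n\times n}$, $M\geq_K 0$ means $MK\subseteq K$, and $M\geq_K N$ means $M-N\geq_K 0$. A splitting $A=U-V$ (with $U$ nonsingular) is $K$-regular if $U^{-1}\geq_K 0$ and $V\geq_K 0$; it is a $K$-weak regular splitting of type I if $U^{-1}\geq_K0$ and $U^{-1}V\geq_K 0$, and of type II if $U^{-1}\geq_K 0$ and $VU^{-1}\geq_K 0$. A splitting $A=U-V$ is convergent if $\rho(U^{-1}V)<1$, where $\rho$ denotes spectral radius. The stationary two-stage iterative method for $Ax=b$ uses the outer splitting $A=U-V$ and inner splitting $U=F-G$ with a fixed number $s\ge 1$ of inner iterations. *)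

(* Defs.v *)
From HB Require Import structures.
From mathcomp Require Import all_boot all_order all_algebra.
From mathcomp Require Import all_classical all_reals.
From mathcomp Require Import all_analysis.
From mathcomp.real_closed Require Import complex.
Set Implicit Arguments. Unset Strict Implicit. Unset Printing Implicit Defensive.
Import Order.TTheory GRing.Theory Num.Theory.
Import numFieldNormedType.Exports.
Local Open Scope ring_scope.
Local Open Scope classical_set_scope.

Section Defs.
Variable R : realType.

Definition is_cone n (K : set 'cV[R]_n) : Prop :=
  forall (a : R) (x : 'cV[R]_n), 0 <= a -> K x -> K (a *: x).
Definition is_convex n (K : set 'cV[R]_n) : Prop :=
  forall (t : R) (x y : 'cV[R]_n), 0 <= t -> t <= 1 -> K x -> K y ->
    K (t *: x + (1 - t) *: y).
Definition is_pointed n (K : set 'cV[R]_n) : Prop :=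
  forall x : 'cV[R]_n, K x -> K (- x) -> x = 0.
Definition is_solid n (K : set 'cV[R]_n) : Prop :=
  exists x : 'cV[R]_n, (K°) x.
Definition proper_cone n (K : set 'cV[R]_n) : Prop :=
  [/\ is_cone K, closed K, is_convex K, is_pointed K & is_solid K].

Definition K_nonneg n (K : set 'cV[R]_n) (M : 'M[R]_n) : Prop :=
  forall x, K x -> K (M *m x).

Definition spectral_radius n (M : 'M[R]_n) : R :=
  sup [set r : R | exists lam : R[i],
         root (char_poly (map_mx (fun x : R => x%:C%C) M)) lam /\ (r%:C)%C = `|lam|].

Definition K_regular_splitting n (K : set 'cV[R]_n) (A U V : 'M[R]_n) : Prop :=
  [/\ A = U - V, U \in unitmx, K_nonneg K (invmx U) & K_nonneg K V].
Definition K_weak_regular_splitting_II n (K : set 'cV[R]_n) (A U V : 'M[R]_n)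
  : Prop :=
  [/\ A = U - V, U \in unitmx, K_nonneg K (invmx U) & K_nonneg K (V *m invmx U)].
Definition convergent_splitting n (U V : 'M[R]_n) : Prop :=
  spectral_radius (invmx U *m V) < 1.

Definition two_stage_T n (V F G : 'M[R]_n) (s : nat) : 'M[R]_n :=
  (invmx F *m G) ^+ s + \sum_(j < s) (invmx F *m G) ^+ j *m invmx F *m V.

End Defs.

(* Main.v *)
Require Import Defs.
From HB Require Import structures.
From mathcomp Require Import all_boot all_order all_algebra.
From mathcomp Require Import all_classical all_reals.
From mathcomp Require Import all_analysis.
From mathcomp.real_closed Require Import complex.
From mathcomp Require Import ring lra.
Set Implicit Arguments. Unset Strict Implicit. Unset Printing Implicit Defensive.
Import Order.TTheory GRing.Theory Num.Theory.
Import numFieldNormedType.Exports.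
Local Open Scope ring_scope.

Section Aux.
Local Open Scope classical_set_scope.
Local Open Scope ring_scope.
Variable R : realType.

Definition tz (u : nat -> R) :=
  forall e : R, 0 < e -> exists N, forall k, (N <= k)%N -> u k < e.

Lemma tz_le (u v : nat -> R) : (forall k, v k <= u k) -> tz u -> tz v.
Proof.
move=> H tu e e0; have [N HN] := tu e e0; exists N => k Hk.
exact: le_lt_trans (H k) (HN k Hk).
Qed.

Lemma tz_add (u v : nat -> R) : tz u -> tz v -> tz (fun k => u k + v k).
Proof.
move=> tu tv e e0.
have e2 : 0 < e / 2 by rewrite divr_gt0.
have [N1 H1] := tu _ e2; have [N2 H2] := tv _ e2.
exists (maxn N1 N2) => k Hk.
have h1 := H1 k (leq_trans (leq_maxl _ _) Hk).
have h2 := H2 k (leq_trans (leq_maxr _ _) Hk).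
lra.
Qed.

Lemma tz_scale (u : nat -> R) c : 0 <= c -> tz u -> tz (fun k => c * u k).
Proof.
move=> c0 tu e e0.
have e2 : 0 < e / (c + 1) by rewrite divr_gt0 // ltr_wpDl.
have [N HN] := tu _ e2; exists N => k Hk.
apply: le_lt_trans (ler_wpM2l c0 (ltW (HN k Hk))) _.
have c1 : 0 < c + 1 by rewrite ltr_wpDl.
rewrite mulrA ltr_pdivrMr //; nra.
Qed.

Lemma tz_sum (T : Type) (s : seq T) (u : T -> nat -> R) :
  (forall i, tz (u i)) -> tz (fun k => \sum_(i <- s) u i k).
Proof.
move=> H; elim: s => [|a s IH].
  by move=> e e0; exists 0%N => k _; rewrite big_nil.
have := tz_add (H a) IH; apply: tz_le => k; rewrite big_cons.
by [].
Qed.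

Lemma tz_pow (c : R) : 0 <= c -> c < 1 -> tz (fun k => c ^+ k).
Proof.
move=> c0 c1 e e0.
have cn : `|c| < 1 by rewrite ger0_norm.
have := cvg_expr cn.
move/(@cvgrPdist_lt _ _ _ _ _)=> /(_ e e0) [N _ HN].
exists N => k Hk; have := HN k Hk; rewrite /= sub0r normrN.
by apply: le_lt_trans; apply: ler_norm.
Qed.

Lemma tz_rec (a b : nat -> R) c : (forall k, 0 <= a k) -> 0 <= c -> c < 1 ->
  (forall k, a k.+1 <= c * a k + b k) -> tz b -> tz a.
Proof.
move=> a0 c0 c1 Hr tb e e0.
have d0 : 0 < e * (1 - c) / 2 by rewrite divr_gt0 // mulr_gt0 // subr_gt0.
have [N1 H1] := tb _ d0.
have claim : forall j, a (N1 + j)%N <= c ^+ j * a N1 + e / 2.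
  elim=> [|j IH]; first by rewrite addn0 expr0 mul1r lerDl ltW // divr_gt0.
  rewrite addnS; apply: le_trans (Hr _) _.
  have hb := H1 (N1 + j)%N (leq_addr _ _).
  have := ler_wpM2l c0 IH; rewrite exprS.
  set x := c ^+ j * a N1 => h.
  rewrite -mulrA -/x; nra.
have [N2 H2] := tz_scale (a0 N1) (tz_pow c0 c1) (divr_gt0 e0 (ltr0Sn _ 1)).
exists (N1 + N2)%N => k Hk.
have Hk1 : (N1 <= k)%N by apply: leq_trans Hk; apply: leq_addr.
have := claim (k - N1)%N; rewrite subnKC //.
have := H2 (k - N1)%N; rewrite leq_subRL // => /(_ Hk); rewrite mulrC => h1 h2.
lra.
Qed.

End Aux.


Section Vec.
Local Open Scope classical_set_scope.
Local Open Scope ring_scope.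
Variable R : realType.

Lemma entry_le m p (x : 'M[R]_(m, p)) i j : `|x i j| <= `|x|.
Proof.
rewrite [leRHS]/Num.Def.normr /= mx_normrE; apply/bigmax_geP; right => /=.
by exists (i, j).
Qed.

Lemma norm_le m p (x : 'M[R]_(m, p)) b : 0 <= b ->
  (forall i j, `|x i j| <= b) -> `|x| <= b.
Proof.
move=> b0 H; rewrite [leLHS]/Num.Def.normr /= mx_normrE; apply/bigmax_leP; split=> //.
Qed.

Lemma norm_lt m p (x : 'M[R]_(m, p)) b : 0 < b ->
  (forall i j, `|x i j| < b) -> `|x| < b.
Proof.
move=> b0 H; rewrite [ltLHS]/Num.Def.normr /= mx_normrE; apply/bigmax_ltP; split=> //.
Qed.

Lemma opbound n (M : 'M[R]_n) : exists2 c, 0 <= c &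
  forall x : 'cV[R]_n, `|M *m x| <= c * `|x|.
Proof.
exists (\sum_i \sum_j `|M i j|); first by apply: sumr_ge0 => i _; apply: sumr_ge0.
move=> x; apply: norm_le; first by apply: mulr_ge0 => //; apply: sumr_ge0 => i _; apply: sumr_ge0.
move=> i j; rewrite mxE.
apply: le_trans (ler_norm_sum _ _ _) _.
apply: (@le_trans _ _ (\sum_j0 `|M i j0| * `|x|)).
  apply: ler_sum => k _; rewrite normrM; apply: ler_wpM2l => //.
  by rewrite (ord1 j); apply: entry_le.
rewrite -mulr_suml; apply: ler_wpM2r => //.
rewrite [leRHS](bigD1 i) //= lerDl; by apply: sumr_ge0 => k _; apply: sumr_ge0.
Qed.

Definition vtz n (u : nat -> 'cV[R]_n) := tz (fun k => `|u k|).

Lemma vtz_add n (u v : nat -> 'cV[R]_n) : vtz u -> vtz v -> vtz (fun k => u k + v k).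
Proof. by move=> a b; apply: tz_le (tz_add a b) => k; apply: ler_normD. Qed.

Lemma vtz_opp n (u : nat -> 'cV[R]_n) : vtz u -> vtz (fun k => - u k).
Proof. by apply: tz_le => k; rewrite normrN. Qed.

Lemma vtz_sub n (u v : nat -> 'cV[R]_n) : vtz u -> vtz v -> vtz (fun k => u k - v k).
Proof. by move=> a b; apply: vtz_add => //; apply: vtz_opp. Qed.

Lemma vtz_scale n (u : nat -> 'cV[R]_n) a : vtz u -> vtz (fun k => a *: u k).
Proof. by move=> h; apply: tz_le (tz_scale (normr_ge0 a) h) => k; rewrite normrZ. Qed.

Lemma vtz_mul n (M : 'M[R]_n) (u : nat -> 'cV[R]_n) : vtz u -> vtz (fun k => M *m u k).
Proof.
move=> h; have [c c0 Hc] := opbound M.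
by apply: tz_le (tz_scale c0 h) => k; apply: Hc.
Qed.

Lemma vtz_ext n (u v : nat -> 'cV[R]_n) : (forall k, u k = v k) -> vtz u -> vtz v.
Proof. by move=> e; apply: tz_le => k; rewrite e. Qed.

End Vec.


Section Cone.
Local Open Scope classical_set_scope.
Local Open Scope ring_scope.
Variable R : realType.
Variable n : nat.
Implicit Types (K : set 'cV[R]_n).

Lemma cone_add K x y : is_cone K -> is_convex K -> K x -> K y -> K (x + y).
Proof.
move=> Hc Hv Kx Ky.
have h2 : (0 : R) <= 2^-1 by rewrite invr_ge0.
have h21 : (2^-1 : R) <= 1 by rewrite invf_le1 // ler1n.
have := Hc 2 _ (ler0n _ 2) (Hv _ _ _ h2 h21 Kx Ky).
have -> : (1 - 2^-1 : R) = 2^-1 by field.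
by rewrite scalerDr !scalerA mulfV ?pnatr_eq0 // !scale1r.
Qed.

Lemma closure_lem K p : closed K ->
  (forall e : R, 0 < e -> exists x, K x /\ `|p - x| < e) -> K p.
Proof.
move=> Kc H; apply: Kc => B /nbhs_ballP [e /= e0 HB].
have [x [Kx hx]] := H e e0; exists x; split => //; apply: HB.
by rewrite -ball_normE /ball_ /=.
Qed.

Lemma cluster_lem (u : nat -> 'cV[R]_n) B : (forall k, `|u k| <= B) ->
  exists p, forall e : R, 0 < e -> forall N, exists k, (N <= k)%N /\ `|p - u k| < e.
Proof.
move=> Hb.
have cC := @rV_compact _ n (fun _ => `[-B, B]%classic) (fun _ => @segment_compact _ (-B) B).
pose f := fun k => (u k)^T.
have H1 : (f @ \oo) [set v : 'rV[R]_n | forall i, `[-B, B]%classic (v ord0 i)].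
  exists 0%N => // k _ i; rewrite /f mxE /= in_itv /= -ler_norml; exact: le_trans (entry_le _ _ _) (Hb k).
have [q [Cq clq]] := cC (f @ \oo) _ H1.
exists q^T => e e0 N.
have HF : (f @ \oo) (f @` [set k | (N <= k)%N]).
  by exists N => // k /= Hk; exists k.
have [v [[k /= Hk <-] hb]] := clq (f @` [set k | (N <= k)%N]) (ball q e) HF (nbhsx_ballx q e e0).
exists k; split => //.
move: hb; rewrite -ball_normE /ball_ /= => hb.
apply: norm_lt => // i j.
have := entry_le (q - f k) j i; rewrite !mxE (ord1 j) /f => h.
exact: le_lt_trans h hb.
Qed.

Lemma normality K : is_cone K -> closed K -> is_pointed K ->
  exists2 C : R, 0 < C & forall x y, K x -> K (y - x) -> `|x| <= C * `|y|.
Proof.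
move=> Hc Kc Hp; apply: contrapT => Hn.
have H : forall k : nat, exists xy : 'cV[R]_n * 'cV[R]_n,
    [/\ K xy.1, K (xy.2 - xy.1) & `|xy.2| * k.+1%:R < `|xy.1|].
  move=> k; apply: contrapT => Hk; apply: Hn; exists k.+1%:R => // x y Kx Kyx.
  rewrite leNgt; apply/negP => hlt; apply: Hk; exists (x, y); split => //=.
  by rewrite mulrC.
have [f Hf] := choice H.
pose x' k := `|(f k).1|^-1 *: (f k).1.
pose y' k := `|(f k).1|^-1 *: (f k).2.
have pos : forall k, 0 < `|(f k).1|.
  move=> k; have [_ _ h] := Hf k; apply: le_lt_trans h.
  by apply: mulr_ge0.
have nx : forall k, `|x' k| = 1.
  by move=> k; rewrite /x' normrZ normrV ?unitfE ?gt_eqF // normr_id mulVf ?gt_eqF.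
have Kx : forall k, K (x' k).
  by move=> k; have [h _ _] := Hf k; apply: Hc => //; rewrite invr_ge0 ltW.
have Kyx : forall k, K (y' k - x' k).
  move=> k; have [_ h _] := Hf k; rewrite /x' /y' -scalerBr.
  by apply: Hc => //; rewrite invr_ge0 ltW.
have ny : forall k, `|y' k| * k.+1%:R < 1.
  move=> k; have [_ _ h] := Hf k; rewrite /y' normrZ normrV ?unitfE ?gt_eqF // normr_id.
  rewrite -mulrA mulrC ltr_pdivrMr // mul1r //.
have hb : forall k, `|x' k| <= 1 by move=> k; rewrite nx.
have [p Hp'] := cluster_lem hb.
have p0 : 0 < `|p|.
  have i2 : (0 : R) < 2^-1 by rewrite invr_gt0.
  have [k [_ hk]] := Hp' (2^-1) i2 0%N.
  have := ler_normD p (x' k - p); rewrite addrC subrK nx distrC.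
  move=> h; lra.
have Kp : K p.
  apply: closure_lem => // e e0; have [k [_ hk]] := Hp' e e0 0%N.
  by exists (x' k).
have Kmp : K (- p).
  apply: closure_lem => // e e0.
  have e2 : 0 < e / 2 by rewrite divr_gt0.
  pose N := Num.Def.archi_bound (2 / e).
  have hN : 2 / e < N%:R by apply: archi_boundP; rewrite ltW // divr_gt0.
  have [k [Hk hk]] := Hp' (e / 2) e2 N.
  exists (y' k - x' k); split => //.
  have -> : - p - (y' k - x' k) = (x' k - p) - y' k.
    by rewrite opprB addrCA addrA.
  apply: le_lt_trans (ler_normB _ _) _.
  rewrite -normrN opprB.
  have hk1 : (N%:R : R) <= k.+1%:R by rewrite ler_nat; apply: leqW.
  have h1 := ny k.
  have h2 : (2 / e) * e = 2 by rewrite mulrAC -mulrA mulfV ?gt_eqF // mulr1.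
  have hm : 2 < k.+1%:R * e.
    rewrite -h2; rewrite ltr_pM2r //; exact: lt_le_trans hN hk1.
  have hy : 0 <= `|y' k| by [].
  have h3 : `|y' k| * 2 <= `|y' k| * (k.+1%:R * e) by rewrite ler_wpM2l // ltW.
  have h4 : `|y' k| * k.+1%:R * e < e by rewrite -[X in _ < X]mul1r ltr_pM2r.
  rewrite mulrA in h3.
  lra.
have := Hp p Kp Kmp; move=> p00; by rewrite p00 normr0 ltxx in p0.
Qed.

Lemma monotone_lem K (a : nat -> 'cV[R]_n) b :
  is_cone K -> is_convex K -> closed K -> is_pointed K -> K 0 ->
  (forall k, K (a k.+1 - a k)) -> (forall k, K (b - a k)) ->
  vtz (fun k => a k.+1 - a k).
Proof.
move=> Hc Hv Kc Hp K0 Ha Hb.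
have mono : forall m j, K (a (m + j)%N - a m).
  move=> m; elim=> [|j IH]; first by rewrite addn0 subrr.
  have -> : a (m + j.+1)%N - a m = (a (m + j).+1 - a (m + j)%N) + (a (m + j)%N - a m).
    by rewrite addnS addrA subrK.
  exact: cone_add.
have mono' : forall m k, (m <= k)%N -> K (a k - a m).
  by move=> m k hmk; have := mono m (k - m)%N; rewrite subnKC.
have [C C0 HC] := normality Hc Kc Hp.
pose c k := a k - a 0%N.
have cdiff : forall k m, c k - c m = a k - a m.
  by move=> k m; rewrite /c opprB addrA subrK.
have hb : forall k, `|c k| <= C * `|b - a 0%N|.
  move=> k; apply: HC; first by rewrite /c; apply: mono' .
  by rewrite /c opprB addrA subrK.
have [p Hp'] := cluster_lem hb.
clearbody c.
have F1 : forall m, K (p - c m).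
  move=> m; apply: closure_lem => // e e0.
  have [k [hk he]] := Hp' e e0 m.
  exists (c k - c m); split; first by rewrite cdiff; apply: mono'.
  by rewrite opprB addrA subrK.
have F2 : forall m k, (m <= k)%N -> `|p - c k| <= C * `|p - c m|.
  move=> m k hmk; apply: HC; first exact: F1.
  rewrite opprB addrC addrA subrK cdiff; exact: mono'.
move=> e e0.
have e2 : 0 < e / (2 * C) by rewrite divr_gt0 // mulr_gt0.
have [m [_ hm]] := Hp' _ e2 0%N.
exists m => k hk.
have <- : (p - c k) - (p - c k.+1) = a k.+1 - a k.
  by rewrite opprB addrC addrA subrK cdiff.
apply: le_lt_trans (ler_normB _ _) _.
have h1 := F2 m k hk.
have h2 := F2 m k.+1 (leqW hk).
have h3 : C * `|p - c m| < C * (e / (2 * C)) by rewrite ltr_pM2l.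
have h4 : C * (e / (2 * C)) = e / 2 by field; rewrite gt_eqF.
lra.
Qed.

Lemma span_lem K : is_cone K -> is_solid K ->
  forall y, exists y1 y2, [/\ K y1, K y2 & y = y1 - y2].
Proof.
move=> Hc [e He] y.
move: He => /nbhs_ballP [d /= d0 Hd].
have n1 : 0 < `|y| + 1 by rewrite ltr_wpDl.
pose t := d / (`|y| + 1).
have t0 : 0 < t by rewrite divr_gt0.
exists (t^-1 *: (e + t *: y)), (t^-1 *: e); split.
- apply: Hc; first by rewrite invr_ge0 ltW.
  apply: Hd; rewrite -ball_normE /ball_ /= opprD addrA subrr sub0r normrN normrZ.
  rewrite gtr0_norm // /t mulrAC ltr_pdivrMr // ltr_pM2l // ltrDl //.
- apply: Hc; first by rewrite invr_ge0 ltW.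
  by apply: Hd; apply: ballxx.
- by rewrite -scalerBr addrC addKr scalerA mulVf ?gt_eqF // scale1r.
Qed.

Definition Kn K (M : 'M[R]_n) := forall x, K x -> K (M *m x).

Lemma Kn_add K M N : is_cone K -> is_convex K -> Kn K M -> Kn K N -> Kn K (M + N).
Proof. by move=> Hc Hv hM hN x Kx; rewrite mulmxDl; apply: cone_add; auto. Qed.

Lemma Kn_mul K M N : Kn K M -> Kn K N -> Kn K (M *m N).
Proof. by move=> hM hN x Kx; rewrite -mulmxA; auto. Qed.

Lemma Kn_exp K M k : Kn K M -> Kn K (M ^+ k).
Proof.
move=> hM; elim: k => [|k IH]; first by move=> x Kx; rewrite expr0 mul1mx.
by rewrite exprS; apply: Kn_mul.
Qed.

Lemma Kn_sum K (T : Type) (s : seq T) (F : T -> 'M[R]_n) : is_cone K -> is_convex K -> K 0 ->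
  (forall i, Kn K (F i)) -> Kn K (\sum_(i <- s) F i).
Proof.
move=> Hc Hv K0 H; elim: s => [|a s IH]; first by move=> x _; rewrite big_nil mul0mx.
by rewrite big_cons; apply: Kn_add.
Qed.

End Cone.


Section Spec.
Local Open Scope classical_set_scope.
Local Open Scope ring_scope.
Variable R : realType.

Definition nc (z : R[i]) : R := complex.Re `|z|.

Lemma ncE z : `|z| = (nc z)%:C%C.
Proof. by rewrite /nc normc_def. Qed.

Lemma nc_ge0 z : 0 <= nc z.
Proof. by have := normr_ge0 z; rewrite ncE -(rmorph0 (real_complex R)) lecR. Qed.

Lemma ncM x y : nc (x * y) = nc x * nc y.
Proof. by apply/(@complexI R); rewrite rmorphM -!ncE normrM. Qed.

Lemma ncD x y : nc (x + y) <= nc x + nc y.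
Proof. by rewrite -lecR rmorphD -!ncE ler_normD. Qed.

Lemma nc_real (x : R) : nc (x%:C%C) = `|x|.
Proof. by rewrite /nc normc_def /= expr0n addr0 sqrtr_sqr. Qed.

Lemma nc0 : nc 0 = 0.
Proof. by rewrite /nc normr0. Qed.

Lemma nc_sum (T : Type) (s : seq T) (F : T -> R[i]) :
  nc (\sum_(i <- s) F i) <= \sum_(i <- s) nc (F i).
Proof.
elim: s => [|a s IH]; first by rewrite !big_nil nc0.
rewrite !big_cons; apply: le_trans (ncD _ _) _; exact: lerD.
Qed.

Lemma nc_eq0 z : (nc z == 0) = (z == 0).
Proof. by rewrite -[z == 0]normr_eq0 ncE -(rmorph0 (real_complex R)) (inj_eq (@complexI R)). Qed.

Lemma norm_le_sum n (x : 'cV[R]_n) : `|x| <= \sum_i `|x i 0|.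
Proof.
apply: norm_le; first by apply: sumr_ge0.
move=> i j; rewrite (ord1 j) [leRHS](bigD1 i) //= lerDl; exact: sumr_ge0.
Qed.

Lemma vtz_entries n (u : nat -> 'cV[R]_n) :
  (forall i, tz (fun k => `|u k i 0|)) -> vtz u.
Proof.
move=> H; have := tz_sum (index_enum 'I_n) H.
apply: tz_le => k; exact: norm_le_sum.
Qed.


Lemma gel n (W : 'M[R]_n.+1) : spectral_radius W < 1 ->
  forall y, vtz (fun k => W ^+ k *m y).
Proof.
move=> hW y.
pose f := (fun x : R => x%:C%C).
pose Wc := map_mx f W.
have [rs Hrs] := closed_field_poly_normal (char_poly Wc).
rewrite (monicP (char_poly_monic _)) scale1r in Hrs.
have rt : forall z, z \in rs -> nc z < 1.
  move=> z zin.
  pose S := [set r : R | exists lam : R[i], root (char_poly Wc) lam /\ (r%:C)%C = `|lam|].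
  have hS : spectral_radius W = sup S by [].
  have Sz : S (nc z) by exists z; split; [rewrite Hrs root_prod_XsubC | rewrite ncE].
  have ub : ubound S (\sum_(w <- rs) nc w).
    move=> r [lam [hl hr]]; move: hl; rewrite Hrs root_prod_XsubC => lin.
    have -> : r = nc lam by apply: (@complexI R); rewrite hr ncE.
    rewrite (big_rem lam) //= lerDl; apply: sumr_ge0 => w _; exact: nc_ge0.
  have hs : has_sup S by split; [exists (nc z) | exists (\sum_(w <- rs) nc w)].
  have := sup_upper_bound hs Sz.
  rewrite -hS => h; exact: le_lt_trans h hW.
have CH : \prod_(z <- rs) (Wc - z%:M) = 0.
  have := Cayley_Hamilton Wc; rewrite Hrs rmorph_prod => <-.
  by apply: eq_bigr => z _; rewrite rmorphB /= horner_mx_X horner_mx_C.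
have peel : forall zs, (forall z, z \in zs -> nc z < 1) -> forall v : 'cV[R[i]]_n.+1,
   (forall i, tz (fun k => nc (((\prod_(z <- zs) (Wc - z%:M)) *m (Wc ^+ k *m v)) i 0))) ->
   forall i, tz (fun k => nc ((Wc ^+ k *m v) i 0)).
  elim=> [|z zs IH] hz v H.
    by move=> i; have := H i; apply: tz_le => k; rewrite big_nil mul1mx.
  apply: IH; first by move=> w win; apply: hz; rewrite in_cons win orbT.
  set P := \prod_(w <- zs) (Wc - w%:M).
  pose u k := P *m (Wc ^+ k *m v).
  pose e k := (Wc - z%:M) *m u k.
  have comm : P *m Wc = Wc *m P.
    have := @commr_prod _ _ zs xpredT (fun w => Wc - w%:M) Wc.
    move=> h; symmetry; apply: h => w _.
    apply: commrB; first by [].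
   
    by rewrite /GRing.comm -!mulmxE scalar_mxC.
  have rec : forall k, u k.+1 = z *: u k + e k.
    move=> k; rewrite /e mulmxBl mul_scalar_mx addrC subrK.
    by rewrite /u exprS -mulmxE -mulmxA mulmxA comm -mulmxA.
  move=> i.
  apply: (@tz_rec _ (fun k => nc (u k i 0)) (fun k => nc (e k i 0)) (nc z)).
  - by move=> k; apply: nc_ge0.
  - exact: nc_ge0.
  - by apply: hz; rewrite mem_head.
  - move=> k; rewrite rec !mxE; apply: le_trans (ncD _ _) _; rewrite ncM; exact: lexx.
  - have := H i; apply: tz_le => k; rewrite big_cons /e /u mulmxA; exact: lexx.
have base : forall i, tz (fun k => nc (((\prod_(z <- rs) (Wc - z%:M)) *m (Wc ^+ k *m map_mx f y)) i 0)).
  by move=> i e e0; exists 0%N => k _; rewrite CH mul0mx mxE nc0.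
have H := peel rs rt (map_mx f y) base.
apply: vtz_entries => i; have := H i; apply: tz_le => k.
by rewrite /Wc -rmorphXn -map_mxM [X in nc X]mxE nc_real.
Qed.


Lemma ncX z k : nc (z ^+ k) = nc z ^+ k.
Proof.
elim: k => [|k IH]; first by rewrite !expr0 /nc normr1.
by rewrite !exprS ncM IH.
Qed.

Lemma bigmax_nc_lt1 (s : seq R[i]) : (forall z, z \in s -> nc z < 1) ->
  \big[Num.max/0]_(z <- s) nc z < 1.
Proof.
elim: s => [|a s IH] H; first by rewrite big_nil ltr01.
rewrite big_cons gt_max H ?mem_head //= IH // => z zin.
by apply: H; rewrite in_cons zin orbT.
Qed.

Lemma bigmax_nc_ub (s : seq R[i]) z : z \in s -> nc z <= \big[Num.max/0]_(w <- s) nc w.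
Proof.
elim: s => [|a s IH] //; rewrite in_cons big_cons le_max => /orP [/eqP -> | zin].
  by rewrite lexx.
by rewrite IH ?orbT.
Qed.

Lemma rho_lt1 n (T : 'M[R]_n) : (forall y, vtz (fun k => T ^+ k *m y)) ->
  spectral_radius T < 1.
Proof.
move=> HT.
pose f := (fun x : R => x%:C%C).
pose Tc := map_mx f T.
have [rs Hrs] := closed_field_poly_normal (char_poly Tc).
rewrite (monicP (char_poly_monic _)) scale1r in Hrs.
have rt : forall lam, root (char_poly Tc) lam -> nc lam < 1.
  move=> lam; rewrite -eigenvalue_root_char => /eigenvalueP [v hv v0].
  have vk : forall k, v *m Tc ^+ k = lam ^+ k *: v.
    elim=> [|k IH]; first by rewrite expr0 mulmx1 scale1r.
    by rewrite exprSr -mulmxE mulmxA IH -scalemxAl hv scalerA -exprSr.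
  have [j vj] : exists j, v 0 j != 0.
    case: (pselect (exists j, v 0 j != 0)) => // H; exfalso; move/negP: v0; apply.
    apply/eqP/rowP => j; rewrite mxE; apply/eqP; apply: contrapT => hj; apply: H.
    by exists j; apply/negP.
  rewrite ltNge; apply/negP => hge.
  pose ej := delta_mx j (0 : 'I_1) : 'cV[R]_n.
  have Hk : forall k, nc (v 0 j) <= \sum_i nc (v 0 i) * `|(T ^+ k *m ej) i 0|.
    move=> k.
    have e1 : (v *m Tc ^+ k) 0 j = lam ^+ k * v 0 j by rewrite vk mxE.
    have e2 : (v *m Tc ^+ k) 0 j = \sum_i v 0 i * f ((T ^+ k *m ej) i 0).
      rewrite mxE; apply: eq_bigr => i _; rewrite -colE [in RHS]mxE.
      by rewrite /Tc -rmorphXn mxE.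
    have : nc (lam ^+ k * v 0 j) <= \sum_i nc (v 0 i) * `|(T ^+ k *m ej) i 0|.
      rewrite -e1 e2; apply: le_trans (nc_sum _ _) _; apply: ler_sum => i _.
      rewrite ncM /f nc_real; exact: lexx.
    rewrite ncM => h; apply: le_trans h; rewrite -[X in X <= _]mul1r; apply: ler_wpM2r.
      exact: nc_ge0.
    by rewrite ncX exprn_ege1.
  have tzR : tz (fun k => \sum_i nc (v 0 i) * `|(T ^+ k *m ej) i 0|).
    apply: tz_sum => i; apply: tz_scale; first exact: nc_ge0.
    by apply: tz_le (HT ej) => k; exact: entry_le.
  have vj0 : 0 < nc (v 0 j) by rewrite lt_def nc_eq0 vj nc_ge0.
  have [N HN] := tzR _ vj0.
  by have := HN N (leqnn N); rewrite ltNge (Hk N).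
have rt' : forall z, z \in rs -> nc z < 1.
  by move=> z zin; apply: rt; rewrite Hrs root_prod_XsubC.
pose S := [set r : R | exists lam : R[i], root (char_poly Tc) lam /\ (r%:C)%C = `|lam|].
have hS : spectral_radius T = sup S by [].
rewrite hS.
have b1 := bigmax_nc_lt1 rt'.
case: (pselect (S !=set0)) => [Sne | S0].
  apply: le_lt_trans b1; apply: ge_sup => // r [lam [hl hr]].
  have -> : r = nc lam by apply: (@complexI R); rewrite hr ncE.
  by apply: bigmax_nc_ub; move: hl; rewrite Hrs root_prod_XsubC.
have -> : S = set0.
  by apply/seteqP; split => x // Sx; apply: S0; exists x.
by rewrite sup0 ltr01.
Qed.

End Spec.


Section Alg.
Local Open Scope classical_set_scope.
Local Open Scope ring_scope.
Variable R : realType.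
Variable n : nat.
Implicit Types M N : 'M[R]_n.

Lemma tele_l M m : (1 - M) *m (\sum_(j < m) M ^+ j) = 1 - M ^+ m.
Proof.
rewrite mulmxE; elim: m => [|m IH]; first by rewrite big_ord0 mulr0 expr0 subrr.
by rewrite big_ord_recr /= mulrDr IH mulrBl mul1r -exprS addrA subrK.
Qed.

Lemma tele_r M m : (\sum_(j < m) M ^+ j) *m (1 - M) = 1 - M ^+ m.
Proof.
rewrite mulmxE; elim: m => [|m IH]; first by rewrite big_ord0 mul0r expr0 subrr.
by rewrite big_ord_recr /= mulrDl IH mulrBr mulr1 -exprSr addrA subrK.
Qed.

Lemma comm_exp M N k : M *m N = N *m M -> M *m N ^+ k = N ^+ k *m M.
Proof.
move=> h; rewrite mulmxE; elim: k => [|k IH]; first by rewrite expr0 mulr1 mul1r.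
by rewrite exprS mulrA -mulmxE h mulmxE -mulrA IH mulrA.
Qed.

End Alg.


Theorem theorem3p3 (R : realType) (n : nat) (K : set 'cV[R]_n)
  (A U V F G : 'M[R]_n) :
  proper_cone K ->
  A \in unitmx ->
  K_regular_splitting K A U V -> convergent_splitting U V ->
  K_weak_regular_splitting_II K U F G -> convergent_splitting F G ->
  V *m invmx F *m G = G *m invmx F *m V ->
  forall s : nat, (0 < s)%N -> spectral_radius (two_stage_T V F G s) < 1.
Proof.
case: n K A U V F G => [|n] K A U V F G.
  move=> *; apply: rho_lt1 => y e e0; exists 0%N => k _.
  by rewrite (flatmx0 (_ *m y)) normr0.
move=> [Hc Kc Hv Hp Hs] Au [AUV Uu KUi KV] cUV [UFG Fu KFi KGF] cFG Hcomm s s0.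
have K0 : K 0.
  have [e He] := Hs; have Ke : K e := nbhs_singleton He.
  by have := Hc 0 e (lexx 0) Ke; rewrite scale0r.
set Fi := invmx F; set Ui := invmx U; set Ai := invmx A.
set W := Ui *m V.
have KW : Kn K W by apply: Kn_mul.
have KAi : Kn K Ai.
  have gW := gel cUV.
  have IW : Ui *m A = 1 - W by rewrite AUV mulmxBr mulVmx.
  move=> y Ky.
  pose z := Ui *m y; pose w := Ai *m y.
  have Kz : K z by apply: KUi.
  have zw : z = w - W *m w.
    by rewrite /z /w -{1}(mulKVmx Au y) (mulmxA Ui A) IW mulmxBl mul1mx.
  have sm : forall m, (\sum_(k < m) W ^+ k) *m z = w - W ^+ m *m w.
    elim=> [|m IH]; first by rewrite big_ord0 mul0mx expr0 mul1mx subrr.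
    rewrite big_ord_recr /= mulmxDl IH zw mulmxBr (mulmxA (W ^+ m) W w) exprSr.
    by rewrite addrA subrK.
  apply: closure_lem => // e e0.
  have [N HN] := gW w e e0.
  exists ((\sum_(k < N) W ^+ k) *m z); split.
    by apply: Kn_sum => // k; apply: Kn_exp.
  by rewrite sm opprB addrCA subrr addr0; apply: HN.
set H := Fi *m G; set P := G *m Fi; set Q := V *m Fi.
have KP : Kn K P by [].
have KQ : Kn K Q by apply: Kn_mul.
set X := P ^+ s + \sum_(j < s) P ^+ j *m Q.
have KX : Kn K X.
  apply: Kn_add => //; first exact: Kn_exp.
  by apply: Kn_sum => // j; apply: Kn_mul => //; apply: Kn_exp.
have FFi : F *m Fi = 1%:M by rewrite mulmxV.
have FiF : Fi *m F = 1%:M by rewrite mulVmx.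
have FH : forall j, F *m H ^+ j = P ^+ j *m F.
  elim=> [|j IH]; first by rewrite !expr0 mulmx1 mul1mx.
  rewrite exprSr (mulmxA F (H ^+ j) H) IH exprSr.
  by rewrite /H /P -!mulmxA (mulmxA F Fi G) FFi mul1mx FiF mulmx1.
set T := two_stage_T V F G s.
have FT : F *m T = X *m F.
  rewrite /T /two_stage_T -/Fi -/H mulmxDr mulmx_sumr FH /X mulmxDl mulmx_suml.
  congr (_ + _); apply: eq_bigr => j _.
  rewrite !mulmxA FH -(mulmxA _ F Fi) FFi mulmx1.
  by rewrite -(mulmxA _ Fi F) FiF mulmx1.
have TE : T = Fi *m X *m F by rewrite -mulmxA -FT mulKmx.
have Tk : forall k, T ^+ k = Fi *m X ^+ k *m F.
  elim=> [|k IH]; first by rewrite !expr0 mulmx1 FiF.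
  rewrite exprSr IH TE exprSr -!mulmxE.
  by rewrite !mulmxA -(mulmxA _ F Fi) FFi mulmx1.
have QP : Q *m P = P *m Q by rewrite /Q /P !mulmxA Hcomm.
have QPk : forall j, Q *m P ^+ j = P ^+ j *m Q by move=> j; apply: comm_exp.
set SP := \sum_(j < s) P ^+ j.
set Mi := Fi *m SP.
have AFi : A *m Fi = 1 - P - Q by rewrite AUV UFG !mulmxBl FFi.
have AMi : A *m Mi = 1 - X.
  rewrite /Mi mulmxA AFi mulmxBl tele_l mulmx_sumr /X opprD addrA.
  by congr (_ - _); apply: eq_bigr => j _; rewrite QPk.
have AiX : Ai *m (1 - X) = Mi by rewrite -AMi mulKmx.
have H1u : (1 - H ^+ s) \in unitmx.
  rewrite -unitmx_tr -row_free_unit -kermx_eq0; apply: contraT => hk.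
  set M := (1 - H ^+ s)^T.
  have [i hi] : exists i, row i (kermx M) != 0.
    case: (pselect (exists i, row i (kermx M) != 0)) => // Hn; exfalso.
    move/negP: hk; apply; apply/eqP/row_matrixP => i; rewrite row0.
    apply/eqP; apply: contrapT => h; apply: Hn; exists i; exact/negP.
  set r := row i (kermx M).
  have hr : r *m M = 0 by rewrite /r -row_mul mulmx_ker row0.
  set w := r^T.
  have hw : (1 - H ^+ s) *m w = 0.
    by rewrite /w -[1 - H ^+ s]trmxK -trmx_mul hr trmx0.
  have hw2 : H ^+ s *m w = w.
    by move/eqP: hw; rewrite mulmxBl mul1mx subr_eq0 => /eqP <-.
  have w0 : 0 < `|w|.
    rewrite normr_gt0; apply: contra hi => /eqP w0.
    by rewrite -(trmxK (row i (kermx M))) -/r -/w w0 trmx0.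
  have Hsk : forall k, H ^+ (s * k) *m w = w.
    elim=> [|k IH]; first by rewrite muln0 expr0 mul1mx.
    by rewrite mulnSr exprD -mulmxE -mulmxA hw2 IH.
  have [N HN] := gel cFG w w0.
  have := HN (s * N)%N (leq_pmull _ s0).
  by rewrite -/Fi -/H Hsk ltxx.
have PsE : 1 - P ^+ s = F *m (1 - H ^+ s) *m Fi.
  by rewrite mulmxBr mulmxBl FH mulmx1 FFi -mulmxA FFi mulmx1.
have SPu : SP \in unitmx.
  have : (1 - P) *m SP \in unitmx.
    by rewrite tele_l PsE !unitmx_mul Fu H1u unitmx_inv Fu.
  by rewrite unitmx_mul => /andP [].
have Miu : Mi \in unitmx by rewrite unitmx_mul unitmx_inv Fu SPu.
have KMi : Kn K Mi.
  apply: Kn_mul => //; apply: Kn_sum => // j; exact: Kn_exp.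
have XK : forall y, K y -> vtz (fun k => X ^+ k *m y).
  move=> y Ky.
  pose a k := Mi *m ((\sum_(j < k) X ^+ j) *m y).
  have ha : forall k, a k = Ai *m y - Ai *m (X ^+ k *m y).
    move=> k; rewrite /a -AiX mulmxA -(mulmxA Ai) tele_l mulmxBr mulmx1 mulmxBl.
    by rewrite mulmxA.
  have Da : forall k, a k.+1 - a k = Mi *m (X ^+ k *m y).
    by move=> k; rewrite /a big_ord_recr /= mulmxDl mulmxDr addrC addKr.
  have Ka : forall k, K (a k.+1 - a k).
    by move=> k; rewrite Da; apply: KMi; apply: (Kn_exp _ KX).
  have Kb : forall k, K (Ai *m y - a k).
    move=> k; rewrite ha opprB addrCA subrr addr0.
    by apply: KAi; apply: (Kn_exp _ KX).
  have := monotone_lem Hc Hv Kc Hp K0 Ka Kb.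
  move/(vtz_mul (invmx Mi)); apply: vtz_ext => k.
  by rewrite Da mulKmx.
have XA : forall y, vtz (fun k => X ^+ k *m y).
  move=> y; have [y1 [y2 [K1 K2 ->]]] := span_lem Hc Hs y.
  have := vtz_sub (XK _ K1) (XK _ K2); apply: vtz_ext => k.
  by rewrite mulmxBr.
apply: rho_lt1 => y.
have := vtz_mul Fi (XA (F *m y)); apply: vtz_ext => k.
by rewrite Tk !mulmxA.
Qed.
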